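(* For all $n\ge 0$, $|F_n(321,1423,2143)|=\binom{n}{2}+1$.
   Context: A permutation $\pi$ avoids a classical pattern $p\in S_k$ if no subsequence of $\pi$ of length $k$ is order-isomorphic to $p$. A Fishburn permutation is a permutation $\pi=\pi_1\cdots\pi_n$ of $[n]$ for which there are no indices $i<j$ with $\pi_j<\pi_i<\pi_{i+1}$ and $\pi_i=\pi_j+1$. $F_n(\sigma_1,\dots,\sigma_k)$ denotes the set of Fishburn permutations of length $n$ avoiding each of the classical patterns $\sigma_1,\dots,\sigma_k$ (with $F_0$ containing only the empty permutation). *)

(* Defs.v *)
From mathcomp Require Import all_boot all_fingroup.
Set Implicit Arguments. Unset Strict Implicit. Unset Printing Implicit Defensive.

(* Permutations of [n] are represented as elements of 'S_n = {perm 'I_n};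
   position i (0-based) holds value s i (0-based). *)

Definition contains (n k : nat) (s : 'S_n) (p : 'S_k) : bool :=
  [exists f : {ffun 'I_k -> 'I_n},
    [forall a : 'I_k, forall b : 'I_k, (a < b) ==> (f a < f b)] &&
    [forall a : 'I_k, forall b : 'I_k, (s (f a) < s (f b)) == (p a < p b)]].

Definition avoids (n k : nat) (s : 'S_n) (p : 'S_k) : bool := ~~ contains s p.

Definition fishburn (n : nat) (s : 'S_n) : bool :=
  ~~ [exists i : 'I_n, exists j : 'I_n, exists i1 : 'I_n,
      [&& val i1 == (val i).+1, i < j, s j < s i, s i < s i1
        & val (s i) == (val (s j)).+1]].

Definition pat (k : nat) (l : seq nat) : 'S_k :=
  odflt 1%g [pick s : 'S_k | [forall i : 'I_k, val (s i) == nth 0 l i]].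

Definition p321 : 'S_3 := pat 3 [:: 2; 1; 0].
Definition p1423 : 'S_4 := pat 4 [:: 0; 3; 1; 2].
Definition p2143 : 'S_4 := pat 4 [:: 1; 0; 3; 2].

Definition F_321_1423_2143 (n : nat) : {set 'S_n} :=
  [set s : 'S_n | [&& fishburn s, avoids s p321, avoids s p1423
                    & avoids s p2143]].

(* Main.v *)
Require Import Defs.
From mathcomp Require Import all_boot all_fingroup zify.
Definition G (x y i : nat) : nat :=
  if y == x.+1 then (if i == x then x.+1 else if i == x.+1 then x else i)
  else if i == 0 then x.+2 else if i <= x.+1 then i.-1
  else if i < y then i.+1 else if i == y then x.+1 else i.
Lemma ltnV m n : m < n \/ n <= m. Proof. by case: (ltnP m n); [left|right]. Qed.

Lemma G_lt x y n i : x < y -> y < n -> i < n -> G x y i < n.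
Proof. move=> *; rewrite /G /=; repeat (case: ifP => /=); lia. Qed.
Lemma G_inj x y i j : x < y -> G x y i = G x y j -> i = j.
Proof. move=> xy; rewrite /G /=; repeat (case: ifP => /=); lia. Qed.
Lemma G_inv x y i j : x < y -> i < j -> G x y j < G x y i ->
  (y = x.+1 /\ i = x /\ j = x.+1) \/
  (x.+1 < y /\ ((i = 0 /\ (j <= x.+1 \/ j = y)) \/ (j = y /\ x.+1 < i))).
Proof. move=> xy ij; rewrite /G /=; repeat (case: ifP => /=); lia. Qed.
Lemma G_inv0y x y : x.+1 < y -> G x y y < G x y 0.
Proof. move=> xy; rewrite /G /=; repeat (case: ifP => /=); lia. Qed.
Arguments G_inv {x y i j}.
Arguments G_inv0y {x y}.
Lemma G_fish x y i j : x < y -> i < j -> G x y j < G x y i ->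
  G x y i = (G x y j).+1 -> G x y i < G x y i.+1 -> False.
Proof. move=> xy ij; rewrite /G /=; repeat (case: ifP => /=); lia. Qed.
Lemma G321 x y i j k : x < y -> i < j -> j < k -> G x y k < G x y j -> G x y j < G x y i -> False.
Proof.
move=> xy ij jk h1 h2.
have := G_inv xy ij h2; have := G_inv xy jk h1; have := G_inv xy (ltn_trans ij jk) (ltn_trans h1 h2); lia.
Qed.
Lemma G1423 x y i j k l : x < y -> i < j -> j < k -> k < l ->
  G x y i < G x y k -> G x y k < G x y l -> G x y l < G x y j -> False.
Proof.
move=> xy ij jk kl h1 h2 h3.
have := G_inv xy jk (ltn_trans h2 h3); have := G_inv xy (ltn_trans jk kl) h3; lia.
Qed.
Lemma G2143 x y i j k l : x < y -> i < j -> j < k -> k < l ->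
  G x y j < G x y i -> G x y i < G x y l -> G x y l < G x y k -> False.
Proof.
move=> xy ij jk kl h1 h2 h3.
have I1 := G_inv xy ij h1; have I2 := G_inv xy kl h3.
case: (ltnV x.+1 y) => c; last by lia.
have [e1 e2] : i = 0 /\ l = y by lia.
subst i l; have := G_inv0y c; lia.
Qed.
Lemma G_moves x y : x < y -> G x y y <> y.
Proof. move=> xy; rewrite /G /=; repeat (case: ifP => /=); lia. Qed.
Lemma G0t x y : y = x.+1 -> G x y 0 <= 1.
Proof. move=> t; rewrite /G /=; repeat (case: ifP => /=); lia. Qed.
Lemma G0f x y : y <> x.+1 -> G x y 0 = x.+2.
Proof. move=> t; rewrite /G /=; repeat (case: ifP => /=); lia. Qed.
Lemma Gyf x y : x < y -> y <> x.+1 -> G x y y = x.+1.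
Proof. move=> ? t; rewrite /G /=; repeat (case: ifP => /=); lia. Qed.
Lemma Gxt x y : y = x.+1 -> G x y x = x.+1.
Proof. move=> t; rewrite /G /=; repeat (case: ifP => /=); lia. Qed.
Lemma G_det x y x' y' n : x < y -> y < n -> x' < y' -> y' < n ->
  (forall i, i < n -> G x y i = G x' y' i) -> x = x' /\ y = y'.
Proof.
move=> xy yn xy' yn' E.
have e0 := E 0 ltac:(lia).
case: (eqVneq y x.+1) => [t|/eqP t]; case: (eqVneq y' x'.+1) => [t'|/eqP t'].
- have := E x ltac:(lia); rewrite (Gxt _ _ t) /G t' eqxx /=; repeat (case: ifP => /=); lia.
- have := G0t _ _ t; have := G0f _ _ t'; lia.
- have := G0t _ _ t'; have := G0f _ _ t; lia.
- have := G0f _ _ t; have := G0f _ _ t'; have ey := E y yn.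
  have := Gyf _ _ xy t; have := Gyf _ _ xy' t'; have := G_inj x' y' y y' xy'; lia.
Qed.
Section Core.
Variables (n : nat) (h : nat -> nat).
Hypothesis Hlt : forall i, i < n -> h i < n.
Hypothesis Hinj : forall i j, i < n -> j < n -> h i = h j -> i = j.
Hypothesis Hsurj : forall v, v < n -> exists2 i, i < n & h i = v.
Hypothesis N321 : forall i j k, i < j -> j < k -> k < n -> h k < h j -> h j < h i -> False.
Hypothesis N1423 : forall i j k l, i < j -> j < k -> k < l -> l < n ->
  h i < h k -> h k < h l -> h l < h j -> False.
Hypothesis N2143 : forall i j k l, i < j -> j < k -> k < l -> l < n ->
  h j < h i -> h i < h l -> h l < h k -> False.
Hypothesis Fish : forall i j, i.+1 < n -> i < j -> j < n -> h j < h i ->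
  h i = (h j).+1 -> h i < h i.+1 -> False.

Lemma core : (forall i, i < n -> h i = i) \/
  exists x y, [/\ x < y, y < n & forall i, i < n -> h i = G x y i].
Proof.
case: (boolP [forall i : 'I_n, h i == i]) => [/forallP H|].
  by left => i Hi; exact: eqP (H (Ordinal Hi)).
rewrite negb_forall => /existsP[i0 Hi0].
have exP : exists a, (a < n) && (h a != a) by exists i0; rewrite ltn_ord Hi0.
right.
case: (ex_minnP exP) => a /andP[an /eqP ha] amin.
have pre : forall i, i < a -> h i = i.
  move=> i ia; case: (eqVneq (h i) i) => // hi.
  have := amin i; rewrite hi andbT; lia.
have posv : forall q, q < n -> h q < a -> q < a.
  move=> q qn hq; have := pre _ hq => e.
  have := Hinj (h q) q (ltn_trans hq an) qn e; lia.
have hage : a < h a.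
  case: (ltngtP (h a) a) => // c; first by have := posv a an c; lia.
set k := h a.
have kn : k < n by apply: Hlt.
have [p pn hp] := Hsurj a an.
have ap : a < p.
  case: (ltngtP a p) => // c; first by have := pre p c; lia.
  by move: hp; rewrite -c; lia.
case: (eqVneq k a.+1) => [ka|kna].
-
  have a1n : a.+1 < n by lia.
  have h1le : h a.+1 <= a.+1.
    case: (ltnP (h a) (h a.+1)) => c; last by lia.
    by exfalso; apply: (Fish a p) => //; lia.
  have h1 : h a.+1 = a.
    have := posv a.+1 a1n; have := Hinj a a.+1 an a1n; lia.
  have inc : forall i j, a.+1 < i -> i < j -> j < n -> h i < h j.
    move=> i j ai ij jn.
    have hjge : a.+1 < h j.
      have := posv j jn; have := Hinj j a jn an; have := Hinj j a.+1 jn a1n; lia.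
    case: (ltngtP (h i) (h j)) => // c.
      by exfalso; apply: (N2143 a a.+1 i j) => //; lia.
    have := Hinj i j (ltn_trans ij jn) jn c; lia.
  have rest : forall i, a.+1 < i -> i < n -> h i = i.
    elim/ltn_ind => i IH ai inn.
    have [r rn hr] := Hsurj i inn.
    have ir : i <= r.
      case: (ltnP r i) => // c; exfalso.
      case: (ltnP r a) => c2; first by have := pre r c2; lia.
      case: (ltnP a.+1 r) => c3; first by have := IH r c c3 rn; lia.
      have : (r = a) \/ (r = a.+1) by lia.
      by case=> e; move: hr; rewrite e; lia.
    have [c|c] := ltnP i r; last by move: hr; rewrite (_ : r = i) //; lia.
      exfalso.
      have hi_ge : i < h i.
        have := posv i inn; have := Hinj i a inn an; have := Hinj i a.+1 inn a1n.
        have := Hinj i r inn rn.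
        case: (ltnV (h i) i) => c2; last by lia.
        have hin := Hlt i inn.
        case: (ltnV a.+1 (h i)) => c3; last by lia.
        have e := IH (h i) c2 c3 hin.
        have := Hinj _ _ inn hin (esym e); lia.
      have := inc i r ai c rn; lia.
  exists a, a.+1; split => // i inn.
  case: (ltnV i a) => c1; first by rewrite pre //; rewrite /G; repeat case: ifP; lia.
  case: (ltnV a.+1 i) => c2; first by rewrite rest //; rewrite /G; repeat case: ifP; lia.
  have : i = a \/ i = a.+1 by lia.
  by case=> ->; rewrite ?h1 /G; repeat case: ifP; lia.
-
  have ka2 : a.+1 < k by lia.
  have [L Ln hL] := Hsurj k.-1 (leq_ltn_trans (leq_pred k) kn).
  have aL : a < L.
    case: (ltngtP a L) => // c; first by have := pre L c; lia.
    by move: hL; rewrite -c; lia.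
  have a1n : a.+1 < n by lia.
  have smallinc : forall i j, a < i -> i < j -> j < n -> h j < k -> h i < k -> h i < h j.
    move=> i j ai ij jn hj hi.
    case: (ltngtP (h i) (h j)) => // c.
      by exfalso; apply: (N321 a i j) => //.
    have := Hinj i j (ltn_trans ij jn) jn c; lia.
  have h1k : h a.+1 < k.
    have := Hinj a a.+1 an a1n.
    case: (ltnP (h a) (h a.+1)) => c; last by lia.
    by exfalso; apply: (Fish a L) => //; lia.
  have h1 : h a.+1 = a.
    have := posv a.+1 a1n.
    case: (ltngtP (h a.+1) a) => c; [lia| |done].
    have pa1 : a.+1 < p.
      case: (ltngtP a.+1 p) => // c2; first lia.
      by move: hp; rewrite -c2; lia.
    have := smallinc a.+1 p (ltnSn a) pa1 pn; lia.
  have a0 : a = 0.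
    case: (posnP a) => // a0; exfalso.
    have [q qn hq] := Hsurj a.+1 (ltn_trans ka2 kn).
    have aq : a.+1 < q.
      case: (ltnP q a) => c; first by have := pre q c; lia.
      have : q <> a by move=> e; move: hq; rewrite e; lia.
      have : q <> a.+1 by move=> e; move: hq; rewrite e; lia.
      lia.
    have h0 := pre 0 a0.
    apply: (N1423 0 a a.+1 q) => //; lia.
  move: ha hage kna ka2 h1 h1k hp hL an ap aL smallinc a1n amin pre posv exP.
  rewrite /k a0 => {k kn a0} ha hage kna ka2 h1 h1k hp hL an ap aL smallinc a1n amin pre posv exP.
  set k := h 0 in ha hage kna ka2 h1 h1k hL smallinc.
  have kn : k < n by apply: Hlt.
  have biginc : forall i j, 1 < i -> i < j -> j < n -> k < h i -> k < h j -> h i < h j.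
    move=> i j ai ij jn hi hj.
    case: (ltngtP (h i) (h j)) => // c.
      by exfalso; apply: (N2143 0 1 i j) => //; lia.
    have := Hinj i j (ltn_trans ij jn) jn c; lia.
  have bigbefore : forall q r, 1 < q -> q < r -> r < n -> k < h q -> h r < k.-1 -> False.
    move=> q r q1 qr rn hq hr.
    case: (posnP (h r)) => w0.
      have := Hinj r 1 rn a1n; lia.
    have [t tn ht] := Hsurj (h r).+1 ltac:(lia).
    have rt : r < t.
      case: (ltngtP r t) => // c.
        case: (posnP t) => t0; first by move: ht; rewrite t0; lia.
        have := smallinc t r t0 c rn; lia.
      move: ht; rewrite c; lia.
    by apply: (N1423 1 q r t) => //; lia.
  have P1 : forall i, 0 < i -> i < k -> h i = i.-1.
    elim/ltn_ind => i IH ip ik.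
    have inn : i < n by lia.
    case: (eqVneq i 1) => [->//|i1].
    have [r rn hr] := Hsurj i.-1 ltac:(lia).
    have ir : i <= r.
      case: (ltnP r i) => // c; exfalso.
      case: (posnP r) => r0; first by move: hr; rewrite r0; lia.
      have := IH r c r0 (ltn_trans c ik); lia.
    have [c|c] := ltnP i r; last by move: hr; rewrite (_ : r = i) //; lia.
      exfalso.
      have hv : i <= h i.
        case: (ltnP (h i) i) => c2 //.
        case: (ltnP (h i) i.-1) => c3.
          have e := IH (h i).+1 ltac:(lia) ltac:(lia) ltac:(lia).
          have := Hinj i (h i).+1 inn ltac:(lia) (esym e); lia.
        have := Hinj i r inn rn; lia.
      have : h i <> k by move=> e; have := Hinj i 0 inn ltac:(lia) e ; lia.
      case: (ltnP (h i) k) => c2 hk.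
        have := smallinc i r ip c rn; lia.
      by apply: (bigbefore i r) => //; lia.
  have kL : k <= L.
    case: (ltnP L k) => // c; have := P1 L aL c; lia.
  have P2 : forall i, k <= i -> i < L -> h i = i.+1.
    elim/ltn_ind => i IH ki iL.
    have inn : i < n by lia.
    have [r rn hr] := Hsurj i.+1 (leq_ltn_trans iL Ln).
    have ir : i <= r.
      case: (ltnP r i) => // c; exfalso.
      case: (posnP r) => r0; first by move: hr; rewrite r0; lia.
      case: (ltnP r k) => c2; first by have := P1 r r0 c2; lia.
      have := IH r c c2 (ltn_trans c iL); lia.
    have [c|c] := ltnP i r; last by move: hr; rewrite (_ : r = i) //; lia.
      exfalso.
      have hin := Hlt i inn.
      have hv : i.+1 < h i.
        have X1 := Hinj i r inn rn; have X2 := Hinj i L inn Ln; have X3 := Hinj i 0 inn ltac:(lia).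
        case: (ltnV (h i) k.-1) => c1.
          have e := P1 (h i).+1 ltac:(lia) ltac:(lia).
          have := Hinj i (h i).+1 inn ltac:(lia) (esym e); lia.
        case: (ltnV k (h i)) => c3; last by lia.
        case: (ltnV i.+1 (h i)) => c4; first by lia.
        have e := IH (h i).-1 ltac:(lia) ltac:(lia) ltac:(lia).
        have := Hinj i (h i).-1 inn ltac:(lia) ltac:(lia); lia.
      have := biginc i r ltac:(lia) c rn ltac:(lia) ltac:(lia); lia.
  have P3 : forall i, L < i -> i < n -> h i = i.
    elim/ltn_ind => i IH Li inn.
    have [r rn hr] := Hsurj i inn.
    have ir : i <= r.
      case: (ltnV r i) => c; last by [].
      exfalso.
      case: (posnP r) => r0; first by move: hr; rewrite r0; lia.
      case: (ltnV r k) => c2; first by have := P1 r r0 c2; lia.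
      case: (ltnV r L) => c3; first by have := P2 r c2 c3; lia.
      case: (eqVneq r L) => [e|ne]; first by move: hr; rewrite e; lia.
      have := IH r c ltac:(lia) rn; lia.
    have [c|c] := ltnP i r; last by move: hr; rewrite (_ : r = i) //; lia.
    exfalso.
    have hin := Hlt i inn.
    have X1 := Hinj i r inn rn; have X2 := Hinj i L inn Ln; have X3 := Hinj i 0 inn ltac:(lia).
    have hv : i < h i.
      case: (ltnV (h i) k.-1) => c1.
        have e := P1 (h i).+1 ltac:(lia) ltac:(lia).
        have := Hinj i (h i).+1 inn ltac:(lia) ltac:(lia); lia.
      case: (ltnV L (h i)) => c2; last first.
        have c3 : k < h i by lia.
        have e := P2 (h i).-1 ltac:(lia) ltac:(lia).
        have := Hinj i (h i).-1 inn ltac:(lia) ltac:(lia); lia.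
      case: (ltnV i (h i)) => c4; first by [].
      case: (ltnV (h i) i) => c5; last by lia.
      have e := IH (h i) c5 c2 hin.
      have := Hinj i (h i) inn hin (esym e); lia.
    have := biginc i r ltac:(lia) c rn ltac:(lia) ltac:(lia); lia.
  have hk0 : h 0 = k by [].
  exists k.-2, L; split; [lia|lia|] => i inn.
  case: (posnP i) => [->|ipos]; first by rewrite /G; repeat case: ifP; lia.
  case: (ltnV i k) => c1; first by rewrite P1 //; rewrite /G; repeat case: ifP; lia.
  case: (ltnV i L) => c2; first by rewrite P2 //; rewrite /G; repeat case: ifP; lia.
  case: (ltnV L i) => c3; first by rewrite P3 //; rewrite /G; repeat case: ifP; lia.
  have -> : i = L by lia.
  by rewrite hL /G; repeat case: ifP; lia.
Qed.
End Core.
Set Implicit Arguments. Unset Strict Implicit. Unset Printing Implicit Defensive.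
Lemma pat_val k (l : seq nat) : size l = k.+1 -> uniq l -> all (fun x => x < k.+1) l ->
  forall i, val (pat k.+1 l i) = nth 0 l i.
Proof.
move=> sz u al.
have lt i : i < k.+1 -> nth 0 l i < k.+1.
  by move=> Hi; apply: (allP al); rewrite mem_nth // sz.
pose f (i : 'I_k.+1) : 'I_k.+1 := inord (nth 0 l i).
have finj : injective f.
  move=> a b /(congr1 (@nat_of_ord _)); rewrite /f !inordK ?lt //.
  move/eqP; rewrite nth_uniq ?sz //; move=> /eqP e; exact: val_inj.
rewrite /pat; case: pickP => [s /forallP H | H] i; first exact: (eqP (H i)).
have := H (perm finj).
suff -> : [forall i, val (perm finj i) == nth 0 l i] by [].
by apply/forallP => j; rewrite permE /f /= inordK ?lt.
Qed.

Lemma p321v i : val (p321 i) = nth 0 [:: 2; 1; 0] i.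
Proof. exact: pat_val. Qed.
Lemma p1423v i : val (p1423 i) = nth 0 [:: 0; 3; 1; 2] i.
Proof. exact: pat_val. Qed.
Lemma p2143v i : val (p2143 i) = nth 0 [:: 1; 0; 3; 2] i.
Proof. exact: pat_val. Qed.

Definition hs n (s : 'S_n) (i : nat) : nat := oapp (fun o : 'I_n => val (s o)) i (insub i).
Lemma hsE n (s : 'S_n) (o : 'I_n) : hs s o = s o.
Proof. by rewrite /hs valK. Qed.

Lemma cont1423 n (s : 'S_n) : contains s p1423 <->
  exists i j k l, [/\ i < j, j < k, k < l, l < n &
    [/\ hs s i < hs s k, hs s k < hs s l & hs s l < hs s j]].
Proof.
split.
- case/existsP => f /andP[/forallP Hm /forallP Ho].
  have M (a b : 'I_4) : a < b -> f a < f b by move=> ab; exact: (implyP (forallP (Hm a) b) ab).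
  have O (a b : 'I_4) : (s (f a) < s (f b)) = (p1423 a < p1423 b) by exact: (eqP (forallP (Ho a) b)).
  exists (f (inord 0)), (f (inord 1)), (f (inord 2)), (f (inord 3)); rewrite !hsE.
  split; try (apply: M; rewrite !inordK //); first exact: ltn_ord.
  by split; rewrite O !p1423v !inordK.
- case=> i [j [k [l [ij jk kl ln [h1 h2 h3]]]]].
  have oi : i < n by lia. have oj : j < n by lia. have ok : k < n by lia.
  apply/existsP; exists [ffun a : 'I_4 => nth (Ordinal ln) [:: Ordinal oi; Ordinal oj; Ordinal ok; Ordinal ln] a].
  apply/andP; split; apply/forallP => a; apply/forallP => b; rewrite !ffunE;
  case: a => [[|[|[|[|a]]]] Ha]; case: b => [[|[|[|[|b]]]] Hb] /=; rewrite ?p1423v /=;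
  rewrite -?hsE /=; lia.
Qed.

Lemma cont2143 n (s : 'S_n) : contains s p2143 <->
  exists i j k l, [/\ i < j, j < k, k < l, l < n &
    [/\ hs s j < hs s i, hs s i < hs s l & hs s l < hs s k]].
Proof.
split.
- case/existsP => f /andP[/forallP Hm /forallP Ho].
  have M (a b : 'I_4) : a < b -> f a < f b by move=> ab; exact: (implyP (forallP (Hm a) b) ab).
  have O (a b : 'I_4) : (s (f a) < s (f b)) = (p2143 a < p2143 b) by exact: (eqP (forallP (Ho a) b)).
  exists (f (inord 0)), (f (inord 1)), (f (inord 2)), (f (inord 3)); rewrite !hsE.
  split; try (apply: M; rewrite !inordK //); first exact: ltn_ord.
  by split; rewrite O !p2143v !inordK.
- case=> i [j [k [l [ij jk kl ln [h1 h2 h3]]]]].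
  have oi : i < n by lia. have oj : j < n by lia. have ok : k < n by lia.
  apply/existsP; exists [ffun a : 'I_4 => nth (Ordinal ln) [:: Ordinal oi; Ordinal oj; Ordinal ok; Ordinal ln] a].
  apply/andP; split; apply/forallP => a; apply/forallP => b; rewrite !ffunE;
  case: a => [[|[|[|[|a]]]] Ha]; case: b => [[|[|[|[|b]]]] Hb] /=; rewrite ?p2143v /=;
  rewrite -?hsE /=; lia.
Qed.

Lemma cont321 n (s : 'S_n) : contains s p321 <->
  exists i j k, [/\ i < j, j < k, k < n, hs s k < hs s j & hs s j < hs s i].
Proof.
split.
- case/existsP => f /andP[/forallP Hm /forallP Ho].
  have M (a b : 'I_3) : a < b -> f a < f b by move=> ab; exact: (implyP (forallP (Hm a) b) ab).
  have O (a b : 'I_3) : (s (f a) < s (f b)) = (p321 a < p321 b) by exact: (eqP (forallP (Ho a) b)).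
  exists (f (inord 0)), (f (inord 1)), (f (inord 2)); rewrite !hsE.
  split; try (apply: M; rewrite !inordK //); first exact: ltn_ord.
  by rewrite O !p321v !inordK.
  by rewrite O !p321v !inordK.
- case=> i [j [k [ij jk kn h1 h2]]].
  have oi : i < n by lia. have oj : j < n by lia.
  apply/existsP; exists [ffun a : 'I_3 => nth (Ordinal kn) [:: Ordinal oi; Ordinal oj; Ordinal kn] a].
  apply/andP; split; apply/forallP => a; apply/forallP => b; rewrite !ffunE;
  case: a => [[|[|[|a]]] Ha]; case: b => [[|[|[|b]]] Hb] /=; rewrite ?p321v /=;
  rewrite -?hsE /=; lia.
Qed.

Lemma hs_lt n (s : 'S_n) i : i < n -> hs s i < n.
Proof. by move=> Hi; rewrite (hsE s (Ordinal Hi)). Qed.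

Lemma hs_inj n (s : 'S_n) i j : i < n -> j < n -> hs s i = hs s j -> i = j.
Proof.
move=> Hi Hj; rewrite (hsE s (Ordinal Hi)) (hsE s (Ordinal Hj)) => /val_inj /perm_inj.
by move/(congr1 val).
Qed.

Lemma hs_surj n (s : 'S_n) v : v < n -> exists2 i, i < n & hs s i = v.
Proof.
move=> Hv; exists (s^-1 (Ordinal Hv))%g => //.
by rewrite hsE permKV.
Qed.

Lemma fishP n (s : 'S_n) : fishburn s <->
  (forall i j, i.+1 < n -> i < j -> j < n -> hs s j < hs s i ->
     hs s i = (hs s j).+1 -> hs s i < hs s i.+1 -> False).
Proof.
split.
- move=> F i j i1n ij jn h1 h2 h3; move/negP: F; apply.
  have oi : i < n by lia.
  apply/existsP; exists (Ordinal oi); apply/existsP; exists (Ordinal jn).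
  apply/existsP; exists (Ordinal i1n).
  apply/and5P; split; rewrite /= -?hsE /=; lia.
- move=> H; apply/negP => /existsP[i /existsP[j /existsP[i1 /and5P[/eqP e1 e2 e3 e4 /eqP e5]]]].
  have E1 : hs s i.+1 = s i1 by rewrite -e1 hsE.
  simpl in e1, e5.
  apply: (H i j); rewrite ?hsE ?E1; try lia; [rewrite -e1 | ]; exact: ltn_ord.
Qed.

Definition gf n (p : 'I_n * 'I_n) (i : 'I_n) : 'I_n :=
  if p.1 < p.2 then insubd i (G p.1 p.2 i) else i.

Lemma gf_inj n (p : 'I_n * 'I_n) : injective (gf p).
Proof.
move=> a b; rewrite /gf; case: ifP => // lt.
move/(congr1 val); rewrite !val_insubd !G_lt ?ltn_ord //.
by move/(G_inj _ _ _ _ lt)/val_inj.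
Qed.

Definition gp n (p : 'I_n * 'I_n) : 'S_n := perm (@gf_inj n p).

Lemma gpE n (p : 'I_n * 'I_n) (i : 'I_n) : p.1 < p.2 -> val (gp p i) = G p.1 p.2 i.
Proof. by move=> lt; rewrite permE /gf lt val_insubd G_lt ?ltn_ord. Qed.

Lemma hs_gp n (p : 'I_n * 'I_n) i : p.1 < p.2 -> i < n -> hs (gp p) i = G p.1 p.2 i.
Proof. by move=> lt Hi; rewrite (hsE _ (Ordinal Hi)) gpE. Qed.

Lemma hs1 n i : i < n -> hs (1%g : 'S_n) i = i.
Proof. by move=> Hi; rewrite (hsE _ (Ordinal Hi)) perm1. Qed.

Lemma inF n (s : 'S_n) : s \in F_321_1423_2143 n ->
  s = 1%g \/ exists2 p, p \in [set p : 'I_n * 'I_n | p.1 < p.2] & s = gp p.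
Proof.
rewrite inE => /and4P[F A1 A2 A3].
have N321 : forall i j k, i < j -> j < k -> k < n -> hs s k < hs s j -> hs s j < hs s i -> False.
  move=> i j k *; move/negP: A1; apply; apply/cont321; by exists i, j, k.
have N1423 : forall i j k l, i < j -> j < k -> k < l -> l < n ->
  hs s i < hs s k -> hs s k < hs s l -> hs s l < hs s j -> False.
  move=> i j k l *; move/negP: A2; apply; apply/cont1423; by exists i, j, k, l.
have N2143 : forall i j k l, i < j -> j < k -> k < l -> l < n ->
  hs s j < hs s i -> hs s i < hs s l -> hs s l < hs s k -> False.
  move=> i j k l *; move/negP: A3; apply; apply/cont2143; by exists i, j, k, l.
case: (@core n (hs s) (@hs_lt n s) (@hs_inj n s) (@hs_surj n s) N321 N1423 N2143 (proj1 (fishP s) F)).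
  move=> H; left; apply/permP => i; apply: val_inj => /=; rewrite perm1 -hsE; exact: H.
case=> x [y [xy yn H]]; right.
have xn : x < n by lia.
exists (Ordinal xn, Ordinal yn); first by rewrite inE.
apply/permP => i; apply: val_inj => /=; rewrite gpE //= -hsE; exact: H.
Qed.

Lemma Fin n (s : 'S_n) : (s = 1%g \/ exists2 p, p \in [set p : 'I_n * 'I_n | p.1 < p.2] & s = gp p) ->
  s \in F_321_1423_2143 n.
Proof.
case=> [->|[p]].
  rewrite inE; apply/and4P; split.
  - apply/fishP => i j i1 ij jn; rewrite !hs1 //; lia.
  - apply/negP => /cont321[i [j [k [ij jk kn]]]]; rewrite !hs1 //; lia.
  - apply/negP => /cont1423[i [j [k [l [ij jk kl ln []]]]]]; rewrite !hs1 //; lia.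
  - apply/negP => /cont2143[i [j [k [l [ij jk kl ln []]]]]]; rewrite !hs1 //; lia.
rewrite inE => lt ->; rewrite inE; apply/and4P; split.
- apply/fishP => i j i1 ij jn; rewrite !hs_gp //; try lia; exact: G_fish.
- apply/negP => /cont321[i [j [k [ij jk kn]]]]; rewrite !hs_gp //; try lia.
  move=> h1 h2; exact: (G321 _ _ _ _ _ lt ij jk h1 h2).
- apply/negP => /cont1423[i [j [k [l [ij jk kl ln]]]]]; rewrite !hs_gp //; try lia.
  case=> h1 h2 h3; exact: (G1423 _ _ _ _ _ _ lt ij jk kl h1 h2 h3).
- apply/negP => /cont2143[i [j [k [l [ij jk kl ln]]]]]; rewrite !hs_gp //; try lia.
  case=> h1 h2 h3; exact: (G2143 _ _ _ _ _ _ lt ij jk kl h1 h2 h3).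
Qed.

Lemma cardD n : #|[set p : 'I_n * 'I_n | p.1 < p.2]| = 'C(n, 2).
Proof.
rewrite -bin2_sum big_mkord -sum1_card.
rewrite (eq_bigl (fun p : 'I_n * 'I_n => p.1 < p.2)); last by move=> p; rewrite inE.
rewrite -(pair_big_dep xpredT (fun i j : 'I_n => i < j) (fun _ _ => 1)) /=.
rewrite (exchange_big_dep xpredT) //=; apply: eq_bigr => j _.
rewrite -(big_ord_widen_cond n (fun _ => true) (fun _ => 1) (ltnW (ltn_ord j))).
by rewrite -[RHS]card_ord -sum1_card.
Qed.

Theorem mainTheorem9 (n : nat) : #|F_321_1423_2143 n| = 'C(n, 2) + 1.
Proof.
have -> : F_321_1423_2143 n = 1%g |: (@gp n @: [set p : 'I_n * 'I_n | p.1 < p.2]).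
  apply/setP => s; rewrite in_setU1; apply/idP/idP.
    move/inF => [->|[p Hp ->]]; first by rewrite eqxx.
    by rewrite orbC (imset_f _ Hp).
  case/orP => [/eqP ->|/imsetP[p Hp ->]]; apply: Fin; [by left | right; by exists p].
have N1 : (1%g : 'S_n) \notin (@gp n @: [set p : 'I_n * 'I_n | p.1 < p.2]).
  apply/negP => /imsetP[p]; rewrite inE => lt /(congr1 (fun s : 'S_n => val (s p.2))).
  by rewrite perm1 gpE //=; move/esym; apply: G_moves.
have Inj : {in [set p : 'I_n * 'I_n | p.1 < p.2] &, injective (@gp n)}.
  move=> p q; rewrite !inE => lp lq e.
  have E : forall i, i < n -> G p.1 p.2 i = G q.1 q.2 i.
    by move=> i Hi; rewrite -(hs_gp lp Hi) -(hs_gp lq Hi) e.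
  case: p q lp lq e E => [x y] [x' y'] /= lp lq _ E.
  have [e1 e2] := G_det _ _ _ _ _ lp (ltn_ord y) lq (ltn_ord y') E.
  by congr pair; apply: val_inj.
by rewrite cardsU1 N1 card_in_imset // cardD addnC.
Qed.
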